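(* Let $S = \{ x \in \mathbb{R}^n \mid h_i^T x \leq 1,\ i = 1, \dots ,r \}$, $A \in \mathbb{R}^{n \times n}$, $\gamma \geq 0$, $c \in \mathbb{R}^n$, and consider the semidefinite program \begin{align*} \min_{x \in \mathbb{R}^n,\, Q \in \mathbb{S}^{n \times n},\, \lambda \in \mathbb{R}} \quad & c^T x\\ \textrm{s.t.} \quad & Q \succ 0, \\ & \begin{bmatrix} Q - A Q A^T & -A Q \\ -Q A^T & -Q \end{bmatrix} \succeq \lambda \begin{bmatrix} \gamma^2 I & 0 \\ 0 & -I \end{bmatrix}, \\ & h_i^T Q h_i \leq 1 \quad i = 1, \dots, r, \\ & \begin{bmatrix} Q & x \\ x^T & 1 \end{bmatrix} \succeq 0, \\ & \lambda \geq 0. \end{align*} Let $\tilde{S}^{\infty}_{\gamma}(A)$ be the projection to $x$-space of the feasible region of this program, and let $S^{\infty}_{\gamma}(A)$ be the set of $x \in S$ such that $f^t(x) \in S$ for all $t = 1,2,\dots$ and all maps $f(x) = Ax + g(x)$ with $g \in \{ g : \mathbb{R}^n \to \mathbb{R}^n \mid \|g(x)\| \leq \gamma \|x\|\ \forall x \in S\}$ ($\ell_2$ norm). Then $\tilde{S}^{\infty}_{\gamma}(A) \subseteq S^{\infty}_{\gamma}(A)$.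
   Context: $\mathbb{S}^{n \times n}$ denotes the space of real symmetric $n\times n$ matrices; $\succ$ and $\succeq$ denote positive definite and positive semidefinite orderings. *)

(* Defs.v *)
From HB Require Import structures.
From mathcomp Require Import all_boot all_order all_algebra.
Set Implicit Arguments. Unset Strict Implicit. Unset Printing Implicit Defensive.
Import Order.TTheory GRing.Theory Num.Theory.
Local Open Scope ring_scope.

Definition psd (R : rcfType) (m : nat) (M : 'M[R]_m) : Prop :=
  M^T = M /\ forall v : 'cV[R]_m, 0 <= (v^T *m M *m v) 0 0.

Definition pd (R : rcfType) (m : nat) (M : 'M[R]_m) : Prop :=
  M^T = M /\ forall v : 'cV[R]_m, v != 0 -> 0 < (v^T *m M *m v) 0 0.

Definition norm2 (R : rcfType) (n : nat) (v : 'cV[R]_n) : R :=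
  Num.sqrt (\sum_(i < n) v i 0 ^+ 2).

Definition polyS (R : rcfType) (n r : nat) (h : 'I_r -> 'cV[R]_n)
  (x : 'cV[R]_n) : Prop :=
  forall i : 'I_r, ((h i)^T *m x) 0 0 <= 1.

Definition sdp_feasible (R : rcfType) (n r : nat) (h : 'I_r -> 'cV[R]_n)
  (A : 'M[R]_n) (gamma : R) (x : 'cV[R]_n) (Q : 'M[R]_n) (lambda : R) : Prop :=
  [/\ pd Q,
      psd (block_mx (Q - A *m Q *m A^T) (- (A *m Q))
                    (- (Q *m A^T))      (- Q)
           - lambda *: block_mx ((gamma ^+ 2)%:M) 0 0 (- 1%:M)),
      (forall i : 'I_r, ((h i)^T *m Q *m h i) 0 0 <= 1),
      psd (block_mx Q x x^T (1%:M : 'M[R]_1)) &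
      0 <= lambda].

Definition S_tilde_inf (R : rcfType) (n r : nat) (h : 'I_r -> 'cV[R]_n)
  (A : 'M[R]_n) (gamma : R) (x : 'cV[R]_n) : Prop :=
  exists (Q : 'M[R]_n) (lambda : R), sdp_feasible h A gamma x Q lambda.

Definition S_inf (R : rcfType) (n r : nat) (h : 'I_r -> 'cV[R]_n)
  (A : 'M[R]_n) (gamma : R) (x : 'cV[R]_n) : Prop :=
  polyS h x /\
  forall g : 'cV[R]_n -> 'cV[R]_n,
    (forall y, polyS h y -> norm2 (g y) <= gamma * norm2 y) ->
    forall t : nat, (0 < t)%N ->
      polyS h (iter t (fun y => A *m y + g y) x).

(* Main.v *)
Require Import Defs.
From HB Require Import structures.
From mathcomp Require Import all_boot all_order all_algebra.
From mathcomp Require Import lra ring.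
Import Order.TTheory GRing.Theory Num.Theory.
Local Open Scope ring_scope.
Section S.
Variable R : rcfType.
Lemma e00D m (M N : 'M[R]_(1,m)) i j : (M + N) i j = M i j + N i j. Proof. by rewrite mxE. Qed.
Lemma e00N m (M : 'M[R]_(1,m)) i j : (- M) i j = - M i j. Proof. by rewrite mxE. Qed.
Lemma e00Z m a (M : 'M[R]_(1,m)) i j : (a *: M) i j = a * M i j. Proof. by rewrite mxE. Qed.
Definition e00E := (e00D, e00N, e00Z).

Lemma lmi (n : nat) (A Q : 'M[R]_n) (lam gamma : R) (u w : 'cV[R]_n) :
  psd (block_mx (Q - A *m Q *m A^T) (- (A *m Q))
                    (- (Q *m A^T))      (- Q)
           - lam *: block_mx ((gamma ^+ 2)%:M) 0 0 (- 1%:M)) ->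
  ((A^T *m u + w)^T *m Q *m (A^T *m u + w)) 0 0 + lam * gamma ^+ 2 * (u^T *m u) 0 0
   - lam * (w^T *m w) 0 0 <= (u^T *m Q *m u) 0 0.
Proof.
move=> [_ /(_ (col_mx u w))].
rewrite tr_col_mx mulmxBr mulmxBl -!scalemxAr -!scalemxAl mul_row_block !mul_row_col.
rewrite !mul_mx_row add_row_mx mul_row_col !mulmx0 ?mul0mx !addr0 !add0r.
move=> H.
do 3 rewrite ?mulmxDl ?mulmxDr ?mulmxBl ?mulmxBr ?mulmxN ?mulNmx ?mul_mx_scalar ?mul_scalar_mx ?scale1r ?mulmx1 ?mul1mx ?mulmxA -?scalemxAl in H.
rewrite (raddfD trmx) /= trmx_mul trmxK.
do 3 rewrite ?mulmxDl ?mulmxDr ?mulmxBl ?mulmxBr ?mulmxN ?mulNmx ?mulmxA.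
rewrite !e00E in H *.
lra.
Qed.

Lemma trZ m k a (M : 'M[R]_(m,k)) : (a *: M)^T = a *: M^T.
Proof. by apply/matrixP=> i j; rewrite !mxE. Qed.

Lemma dotC {n} (u v : 'cV[R]_n) : (u^T *m v) 0 0 = (v^T *m u) 0 0.
Proof.
have <- : (v^T *m u)^T = u^T *m v by rewrite trmx_mul trmxK.
by rewrite mxE.
Qed.

Lemma dot_sq {n} (v : 'cV[R]_n) : (v^T *m v) 0 0 = \sum_i v i 0 ^+ 2.
Proof. rewrite mxE; apply: eq_bigr => i _; by rewrite mxE expr2. Qed.

Lemma dot_ge0 {n} (v : 'cV[R]_n) : 0 <= (v^T *m v) 0 0.
Proof. rewrite dot_sq; apply: sumr_ge0 => i _; exact: sqr_ge0. Qed.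

Lemma dot_eq0 {n} (v : 'cV[R]_n) : (v^T *m v) 0 0 = 0 -> v = 0.
Proof.
rewrite dot_sq => /eqP; rewrite psumr_eq0; last by move=> i _; exact: sqr_ge0.
move=> /allP H; apply/matrixP=> i j; rewrite (ord1 j) mxE.
have := H i (mem_index_enum i); rewrite /= sqrf_eq0 => /eqP ->; done.
Qed.

Lemma CS {n} (u z : 'cV[R]_n) : ((u^T *m z) 0 0) ^+ 2 <= (u^T *m u) 0 0 * (z^T *m z) 0 0.
Proof.
have [z0|zn0] := eqVneq ((z^T *m z) 0 0) 0.
  move/dot_eq0: z0 => ->; by rewrite mulmx0 trmx0 mul0mx !mxE expr0n /= mulr0.
have zp : 0 < (z^T *m z) 0 0 by rewrite lt_def zn0 dot_ge0.
set t := (u^T *m z) 0 0 / (z^T *m z) 0 0.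
have := dot_ge0 (u - t *: z).
rewrite (raddfB trmx) /= trZ mulmxBl !mulmxBr -!scalemxAl -!scalemxAr !e00E.
rewrite (dotC z u) /t => H.
have e : (z^T *m z) 0 0 * ((u^T *m z) 0 0 / (z^T *m z) 0 0) = (u^T *m z) 0 0.
  by rewrite mulrC -mulrA mulVf // mulr1.
nra.
Qed.

Definition inE {n} (Q : 'M[R]_n) (y : 'cV[R]_n) :=
  forall v : 'cV[R]_n, ((v^T *m y) 0 0) ^+ 2 <= (v^T *m Q *m v) 0 0.

Lemma inE_x {n} (Q : 'M[R]_n) x : psd (block_mx Q x x^T (1%:M : 'M[R]_1)) -> inE Q x.
Proof.
move=> [_ H] v; move: (H (col_mx v ((- (v^T *m x) 0 0)%:M))).
rewrite tr_col_mx mul_row_block mul_row_col tr_scalar_mx mulmx1 !mul_scalar_mx.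
rewrite mulmxDl !mul_mx_scalar -scalemxAl !e00E (dotC x v).
rewrite [(_%:M) 0 0]mxE eqxx mulr1n.
move=> H1; lra.
Qed.

Lemma step {n} (A Q : 'M[R]_n) lam gamma (y z : 'cV[R]_n) :
  psd (block_mx (Q - A *m Q *m A^T) (- (A *m Q))
                    (- (Q *m A^T))      (- Q)
           - lam *: block_mx ((gamma ^+ 2)%:M) 0 0 (- 1%:M)) ->
  0 <= lam -> inE Q y -> (z^T *m z) 0 0 <= gamma ^+ 2 * (y^T *m y) 0 0 ->
  inE Q (A *m y + z).
Proof.
move=> HL hl Hy Hz u.
have cs := CS u z.
have yy0 := dot_ge0 y; have zz0 := dot_ge0 z; have uu0 := dot_ge0 u.
set uz := (u^T *m z) 0 0 in cs *; set yy := (y^T *m y) 0 0 in Hz yy0 *.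
set uu := (u^T *m u) 0 0 in cs uu0 *; set zz := (z^T *m z) 0 0 in cs Hz zz0 *.
set w := (uz / yy) *: y.
have Hw : (w^T *m y) 0 0 = uz /\ (w^T *m w) 0 0 <= gamma ^+ 2 * uu.
  rewrite /w trZ -!scalemxAl -scalemxAr !e00E -/yy.
  have [y0|yn0] := eqVneq yy 0.
    rewrite y0 invr0 !mulr0 ?mul0r; split; last by apply: mulr_ge0 => //; exact: sqr_ge0.
    have zz00 : zz = 0 by rewrite y0 mulr0 in Hz; apply/eqP; rewrite eq_le Hz zz0.
    by rewrite /uz (dot_eq0 z zz00) mulmx0 mxE.
  have yp : 0 < yy by rewrite lt_def yn0 yy0.
  rewrite divfK //; split => //.
  have -> : uz / yy * uz = uz ^+ 2 / yy by rewrite expr2 mulrAC.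
  rewrite ler_pdivrMr //.
  have : uu * zz <= uu * (gamma ^+ 2 * yy) by rewrite ler_wpM2l.
  lra.
have Ha := Hy (A^T *m u + w).
have L := @lmi _ A Q lam gamma u w HL.
have e1 : ((A^T *m u + w)^T *m y) 0 0 = (u^T *m (A *m y + z)) 0 0.
  by rewrite (raddfD trmx) /= trmx_mul trmxK mulmxDl mulmxDr !e00E Hw.1 mulmxA.
rewrite -e1; apply: (le_trans Ha).
have h2 : 0 <= gamma ^+ 2 * uu - (w^T *m w) 0 0 by rewrite subr_ge0; exact: Hw.2.
have := mulr_ge0 hl h2; rewrite -/uu in L.
lra.
Qed.
End S.

Theorem lemma26 (R : rcfType) (n r : nat) (h : 'I_r -> 'cV[R]_n)
  (A : 'M[R]_n) (gamma : R) (c : 'cV[R]_n) (hgamma : 0 <= gamma) :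
  forall x : 'cV[R]_n, S_tilde_inf h A gamma x -> S_inf h A gamma x.
Proof.
move=> x [Q [lam [HQ HL Hh HX hl]]].
have inx := @inE_x _ _ Q x HX.
have pol : forall y, inE R Q y -> polyS h y.
  move=> y Hy i; have := Hy (h i); have := Hh i; nra.
split; first exact: pol.
move=> g Hg t _; apply (pol).
elim: t => [|t IH] //=.
apply: (@step _ _ A Q lam gamma _ _ HL hl IH).
have := Hg _ (pol _ IH); rewrite /norm2 -!dot_sq.
rewrite -(ger0_norm hgamma) -sqrtr_sqr -sqrtrM ?sqr_ge0 // ler_sqrt //.
rewrite sqrtr_sqr ger0_norm //.
by apply: mulr_ge0; [exact: sqr_ge0 | exact: dot_ge0].
Qed.
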